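(* Let $M$ be a packed square matrix and $(M_1, M_2)$ be a column (resp. row) decomposition of $M$. Then, there is no integer $i$ such that the $i$th rows (resp. columns) of $M_1$ and $M_2$ contain both a nonzero entry.
   Context: Let $k \geq 1$, $A_k := \{0,1,\dots,k\}$. A ($k$-)packed matrix of size $n$ is an $n \times n$ matrix with entries in $A_k$ having at least one nonzero entry in each row and each column. The compression $\operatorname{cp}(M)$ of a matrix $M$ is the matrix obtained by deleting all null rows and columns of $M$. A tuple $(M_1,\dots,M_r)$ is a column decomposition of $M$ if $M$ is the horizontal juxtaposition $[M_1 | \cdots | M_r]$ and each $\operatorname{cp}(M_i)$ is a square matrix; it is a row decomposition of $M$ if $M$ is the vertical stacking of $M_1, \dots, M_r$ (from top to bottom) and each $\operatorname{cp}(M_i)$ is a square matrix. *)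

(* Defs.v *)
From HB Require Import structures.
From mathcomp Require Import all_boot all_order all_algebra.
Set Implicit Arguments. Unset Strict Implicit. Unset Printing Implicit Defensive.

(* Matrices with natural-number entries; entries in A_k = {0,...,k} are
   expressed by the bound  M i j <= k. *)

Definition null_row (m n : nat) (A : 'M[nat]_(m, n)) (i : 'I_m) : bool :=
  [forall j, A i j == 0%N].
Definition null_col (m n : nat) (A : 'M[nat]_(m, n)) (j : 'I_n) : bool :=
  [forall i, A i j == 0%N].

(* cp(A) is obtained by deleting null rows and columns; it has
   #(non-null rows) rows and #(non-null columns) columns. *)
Definition cp_nrows (m n : nat) (A : 'M[nat]_(m, n)) : nat :=
  #|[set i | ~~ null_row A i]|.
Definition cp_ncols (m n : nat) (A : 'M[nat]_(m, n)) : nat :=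
  #|[set j | ~~ null_col A j]|.
Definition cp_square (m n : nat) (A : 'M[nat]_(m, n)) : Prop :=
  cp_nrows A = cp_ncols A.

Definition packed (k n : nat) (M : 'M[nat]_n) : Prop :=
  (forall i j, M i j <= k)
  /\ (forall i, ~~ null_row M i)
  /\ (forall j, ~~ null_col M j).

Definition col_decomp (n n1 n2 : nat) (M : 'M[nat]_(n, n1 + n2))
  (M1 : 'M[nat]_(n, n1)) (M2 : 'M[nat]_(n, n2)) : Prop :=
  M = row_mx M1 M2 /\ cp_square M1 /\ cp_square M2.

Definition row_decomp (n n1 n2 : nat) (M : 'M[nat]_(n1 + n2, n))
  (M1 : 'M[nat]_(n1, n)) (M2 : 'M[nat]_(n2, n)) : Prop :=
  M = col_mx M1 M2 /\ cp_square M1 /\ cp_square M2.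

(* Main.v *)
Require Import Defs.
From HB Require Import structures.
From mathcomp Require Import all_boot all_order all_algebra.
From mathcomp Require Import zify.



Lemma disj_aux (T : finType) (A B : {set T}) :
  A :|: B = setT -> #|A| + #|B| = #|T| -> forall x, x \in A -> x \in B -> False.
Proof.
move=> hU hc x xa xb.
have h1 := cardsUI A B; rewrite hU cardsT hc in h1.
have : #|A :&: B| = 0 by lia.
by move/eqP; rewrite cards_eq0 => /eqP h0; move: (in_set0 x); rewrite -h0 inE xa xb.
Qed.

Theorem lemma1p1 (k : nat) (hk : 1 <= k) :
  (forall (n1 n2 : nat) (M : 'M[nat]_(n1 + n2))
          (M1 : 'M[nat]_(n1 + n2, n1)) (M2 : 'M[nat]_(n1 + n2, n2)),
      packed k M -> col_decomp M M1 M2 ->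
      ~ (exists i, ~~ null_row M1 i /\ ~~ null_row M2 i))
  /\
  (forall (n1 n2 : nat) (M : 'M[nat]_(n1 + n2))
          (M1 : 'M[nat]_(n1, n1 + n2)) (M2 : 'M[nat]_(n2, n1 + n2)),
      packed k M -> row_decomp M M1 M2 ->
      ~ (exists j, ~~ null_col M1 j /\ ~~ null_col M2 j)).
Proof.
split.
- move=> n1 n2 M M1 M2 [_ [hr hc]] [eM [s1 s2]] [i [i1 i2]]; subst M.
  apply: (@disj_aux _ [set i | ~~ null_row M1 i] [set i | ~~ null_row M2 i]) (i) _ _; rewrite ?inE //.
  + apply/setP => x; rewrite !inE; have := hr x.
    rewrite /null_row => /forallPn [j hj]; move: hj; rewrite -(splitK j); case: (split j) => j' /= hj.
    * by apply/orP; left; apply/forallPn; exists j'; rewrite row_mxEl in hj.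
    * by apply/orP; right; apply/forallPn; exists j'; rewrite row_mxEr in hj.
  + rewrite card_ord; move: s1 s2; rewrite /cp_square /cp_nrows => -> ->.
    rewrite /cp_ncols; congr addn.
    * rewrite -[RHS]card_ord; apply: eq_card => j; rewrite inE.
      have := hc (lshift n2 j); rewrite /null_col => /forallPn [i' hi].
      by apply/forallPn; exists i'; rewrite row_mxEl in hi.
    * rewrite -[RHS]card_ord; apply: eq_card => j; rewrite inE.
      have := hc (rshift n1 j); rewrite /null_col => /forallPn [i' hi].
      by apply/forallPn; exists i'; rewrite row_mxEr in hi.
- move=> n1 n2 M M1 M2 [_ [hr hc]] [eM [s1 s2]] [i [i1 i2]]; subst M.
  apply: (@disj_aux _ [set i | ~~ null_col M1 i] [set i | ~~ null_col M2 i]) (i) _ _; rewrite ?inE //.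
  + apply/setP => x; rewrite !inE; have := hc x.
    rewrite /null_col => /forallPn [j hj]; move: hj; rewrite -(splitK j); case: (split j) => j' /= hj.
    * by apply/orP; left; apply/forallPn; exists j'; rewrite col_mxEu in hj.
    * by apply/orP; right; apply/forallPn; exists j'; rewrite col_mxEd in hj.
  + rewrite card_ord; move: s1 s2; rewrite /cp_square /cp_ncols => <- <-.
    rewrite /cp_nrows; congr addn.
    * rewrite -[RHS]card_ord; apply: eq_card => j; rewrite inE.
      have := hr (lshift n2 j); rewrite /null_row => /forallPn [i' hi].
      by apply/forallPn; exists i'; rewrite col_mxEu in hi.
    * rewrite -[RHS]card_ord; apply: eq_card => j; rewrite inE.
      have := hr (rshift n1 j); rewrite /null_row => /forallPn [i' hi].
      by apply/forallPn; exists i'; rewrite col_mxEd in hi.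
Qed.
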